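(* Let $C_s$ be a generalized sequential choice rule with categories $1,\dots,K$ as described in the context, and let $X^M=(x^1,\dots,x^M)$ be an observable offer process for $s$. For every $m\in\{1,\dots,M\}$ and every category $k\in\{1,\dots,K\}$ (with $X^0=\emptyset$): 1. $C_k(H_k(X^{m-1});q_k^{m-1})\subseteq H_k(X^m)$; 2. $C_k(F_k(X^m);q_k^m)\subseteq C_k(H_k(X^{m-1});q_k^{m-1})\cup[H_k(X^m)\setminus H_k(X^{m-1})]$; 3. $C_k(H_k(X^m);q_k^m)=C_k(F_k(X^m);q_k^m)$; 4. $q_k^{m-1}\ge q_k^m$; 5. $R_k(F_k(X^{m-1});q_k^{m-1})\subseteq R_k(F_k(X^m);q_k^m)$.
   Context: Contracts: a finite set $X$; each $x\in X$ has an individual $\mathbf{i}(x)$ and an institution $\mathbf{s}(x)$; $X_s=\{x:\mathbf{s}(x)=s\}$, $\mathbf{i}(Y)=\{\mathbf{i}(x):x\in Y\}$, and $Y_i$ is the set of contracts of $i$ in $Y$. Generalized sequential choice rule $C_s$: there are ordered categories $1,\dots,K$. Each category $k$ has a choice rule $C_k(\cdot\,;q):2^{X_s}\to 2^{X_s}$ for every capacity $q\in\mathbb{Z}_+$, with $C_k(Y;q)\subseteq Y$, choosing at most one contract per individual, such that for each fixed $q$: (substitutes) for all $x,y$ and $Z$, $y\notin C_k(Z\cup\{y\};q)$ implies $y\notin C_k(Z\cup\{x,y\};q)$; (size monotonicity) $|C_k(Z;q)|\le|C_k(Z\cup\{x\};q)|$; and (quota monotonicity) $C_k(Y;q)\subseteq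 C_k(Y;q+1)$ and $|C_k(Y;q+1)|-|C_k(Y;q)|\le1$ for all $Y$. Given $Y\subseteq X_s$, the rule is computed sequentially: $H_1(Y)=Y$ and $q_1$ is an exogenous capacity; for $k\ge1$, $r_k=q_k-|C_k(H_k(Y);q_k)|$ is the unused capacity of category $k$; $q_k=q_k(r_1,\dots,r_{k-1})$ for $k\ge2$, where each transfer function $q_k(\cdot)$ is weakly increasing in each argument (monotone transfer policy); $H_k(Y)=\{y\in Y:\mathbf{i}(y)\notin\mathbf{i}(\bigcup_{k'<k}C_{k'}(H_{k'}(Y);q_{k'}))\}$ is the set of contracts available to category $k$. Then $C_s(Y)=\bigcup_{k}C_k(H_k(Y);q_k)$. Write $R_k(Y;q)=Y\setminus C_k(Y;q)$. Offer process: a finite sequence of distinct contracts $(x^1,\dots,x^M)$ in $X_s$; it is observable if for every $m$, $\mathbf{i}(x^m)\notin\mathbf{i}(C_s(\{x^1,\dots,x^{m-1}\}))$. Write $X^m=\{x^1,\dots,x^m\}$ and $X^0=\emptyset$. $H_k(X^m)$ denotes the set of contracts available to category $k$ in the computation of $C_s(X^m)$, $q_k^m$ the capacity of category $k$ in that computation (so $q_k^m=q_k(\tilde r_1,\dots,\tilde r_{k-1})$ with the unused capacities $\tilde r$ of that computation, and $q_1^m=q_1$), and $F_k(X^m)=\bigcup_{n\le m}H_k(X^n)$. *)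

(* Defs.v *)
From mathcomp Require Import all_boot all_order all_algebra.
Set Implicit Arguments.
Unset Strict Implicit.
Unset Printing Implicit Defensive.

(* The contract type T plays the role of X_s (the contracts of the fixed
   institution s); ind plays the role of the individual map i(.).
   Categories are indexed 0,...,K-1 (category k of the paper is index k-1). *)

Section GSC.
Variables (T : finType) (I : eqType) (ind : T -> I).

Definition one_per_individual (Y : {set T}) : Prop :=
  forall x y, x \in Y -> y \in Y -> ind x = ind y -> x = y.

Definition category_rule (C : {set T} -> nat -> {set T}) : Prop :=
  forall q : nat,
  [/\ (forall Y, C Y q \subset Y),
      (forall Y, one_per_individual (C Y q)),
      (forall (x y : T) (Z : {set T}),
          y \notin C (y |: Z) q -> y \notin C (x |: (y |: Z)) q),
      (forall (x : T) (Z : {set T}), #|C Z q| <= #|C (x |: Z) q|) &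
      (forall Y, C Y q \subset C Y q.+1 /\ #|C Y q.+1| <= #|C Y q| + 1)].

(* Monotone transfer policy: qf k [:: r_1; ...; r_(k)] is the capacity of
   (0-indexed) category k given the unused capacities of earlier categories;
   qf 0 [::] is the exogenous capacity q_1. *)
Definition monotone_transfer (qf : nat -> seq int -> nat) : Prop :=
  forall k (rs rs' : seq int), size rs = k ->
    all2 (fun a b => (a <= b)%R) rs rs' -> qf k rs <= qf k rs'.

Variables (Ck : nat -> {set T} -> nat -> {set T}) (qf : nat -> seq int -> nat).

Definition avail (U Y : {set T}) : {set T} :=
  [set y in Y | ~~ [exists u in U, ind u == ind y]].

(* run k Y = (union of the sets chosen by categories 0..k-1,
              [:: r_1; ...; r_k] unused capacities) *)
Fixpoint run (k : nat) (Y : {set T}) : {set T} * seq int :=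
  match k with
  | 0 => (set0, [::])
  | k'.+1 =>
      let: (U, rs) := run k' Y in
      let q := qf k' rs in
      let C := Ck k' (avail U Y) q in
      (U :|: C, rcons rs (q%:Z - (#|C|)%:Z)%R)
  end.

Definition Hk (k : nat) (Y : {set T}) : {set T} := avail (run k Y).1 Y.
Definition qk (k : nat) (Y : {set T}) : nat := qf k (run k Y).2.
Definition Cs (K : nat) (Y : {set T}) : {set T} := (run K Y).1.

Definition Rk (k : nat) (Y : {set T}) (q : nat) : {set T} := Y :\: Ck k Y q.

Definition Xpre (xs : seq T) (m : nat) : {set T} := [set x in take m xs].

Definition Fk (k : nat) (xs : seq T) (m : nat) : {set T} :=
  \bigcup_(n < m.+1) Hk k (Xpre xs n).

Definition observable (K : nat) (xs : seq T) : Prop :=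
  uniq xs /\
  forall (m : nat) (x0 : T), m < size xs ->
    ~~ [exists y in Cs K (Xpre xs m), ind y == ind (nth x0 xs m)].

End GSC.

(* Main.v *)
Require Import Defs.
From mathcomp Require Import all_boot all_order all_algebra.
From mathcomp Require Import zify.
Set Implicit Arguments.
Unset Strict Implicit.

Lemma cr_sub (T : finType) (I : eqType) (ind : T -> I) C (HC : category_rule ind C) Y q :
  C Y q \subset Y.
Proof. by case: (HC q). Qed.

Lemma cr_rej_mono (T : finType) (I : eqType) (ind : T -> I) C (HC : category_rule ind C) q
  (Z Z' : {set T}) y : Z \subset Z' -> y \in Z -> y \notin C Z q -> y \notin C Z' q.
Proof.
case: (HC q) => _ _ Hs _ _.
have E : forall (s : seq T) (W : {set T}), y \in W -> y \notin C W q -> y \notin C (W :|: [set x in s]) q.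
  elim=> [|a s IH] W yW yC.
    by have -> : W :|: [set x in [::]] = W by apply/setP=> z; rewrite !inE orbF.
  have E1 : W :|: [set x in a :: s] = a |: (y |: (W :|: [set x in s])).
    rewrite (setUidPr (_ : [set y] \subset W :|: [set x in s])); last by rewrite sub1set inE yW.
    by apply/setP=> z; rewrite !inE; case: (z == a); rewrite ?orbT.
  rewrite E1; apply: Hs.
  rewrite (setUidPr (_ : [set y] \subset W :|: [set x in s])); last by rewrite sub1set inE yW.
  exact: IH.
move=> sZ yZ yC.
have -> : Z' = Z :|: [set x in enum Z'].
  by apply/setP=> z; rewrite !inE mem_enum; case zZ: (z \in Z) => //=; rewrite (subsetP sZ).
exact: E.
Qed.

Lemma cr_size_mono (T : finType) (I : eqType) (ind : T -> I) C (HC : category_rule ind C) q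
  (Z Z' : {set T}) : Z \subset Z' -> #|C Z q| <= #|C Z' q|.
Proof.
case: (HC q) => _ _ _ Hsz _.
have E : forall (s : seq T) (W : {set T}), #|C W q| <= #|C (W :|: [set x in s]) q|.
  elim=> [|a s IH] W.
    by have -> : W :|: [set x in [::]] = W by apply/setP=> z; rewrite !inE orbF.
  have -> : W :|: [set x in a :: s] = a |: (W :|: [set x in s]).
    by apply/setP=> z; rewrite !inE; case: (z == a); rewrite ?orbT.
  exact: leq_trans (IH W) (Hsz _ _).
move=> sZ.
have -> : Z' = Z :|: [set x in enum Z'].
  by apply/setP=> z; rewrite !inE mem_enum; case zZ: (z \in Z) => //=; rewrite (subsetP sZ).
exact: E.
Qed.

Lemma cr_irc1 (T : finType) (I : eqType) (ind : T -> I) C (HC : category_rule ind C) q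
  (W : {set T}) a : a \notin C (a |: W) q -> C (a |: W) q = C W q.
Proof.
move=> aC.
case: (HC q) => Hsub _ _ Hsz _.
have sub1 : C (a |: W) q \subset C W q.
  apply/subsetP=> z zC.
  have zaW := subsetP (Hsub _) _ zC.
  have za : z != a by apply/eqP=> E; move: aC; rewrite -{1}E zC.
  have zW : z \in W by move: zaW; rewrite in_setU1 (negbTE za).
  apply: contraT => zn.
  have : z \notin C (a |: W) q.
    apply: (cr_rej_mono HC (Z := W)) => //; exact: subsetUr.
  by rewrite zC.
apply/eqP; rewrite eqEcard sub1 /=; exact: Hsz.
Qed.

Lemma cr_irc (T : finType) (I : eqType) (ind : T -> I) C (HC : category_rule ind C) q
  (Z Z' : {set T}) : C Z' q \subset Z -> Z \subset Z' -> C Z q = C Z' q.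
Proof.
have E : forall (s : seq T) (W : {set T}), C (W :|: [set x in s]) q \subset W -> C W q = C (W :|: [set x in s]) q.
  elim=> [|a s IH] W.
    by have -> : W :|: [set x in [::]] = W by apply/setP=> z; rewrite !inE orbF.
  have -> : W :|: [set x in a :: s] = a |: (W :|: [set x in s]).
    by apply/setP=> z; rewrite !inE; case: (z == a); rewrite ?orbT.
  case aW: (a \in W :|: [set x in s]).
    by rewrite (setUidPr _) ?sub1set // => /IH.
  move=> sC.
  have aC : a \notin C (a |: (W :|: [set x in s])) q.
    apply: contraFN aW => /(subsetP sC) aW'; by rewrite inE aW'.
  rewrite (cr_irc1 HC aC) in sC *; exact: IH.
move=> sC sZ.
have EZ : Z' = Z :|: [set x in enum Z'].
  by apply/setP=> z; rewrite !inE mem_enum; case zZ: (z \in Z) => //=; rewrite (subsetP sZ).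
rewrite EZ; apply: E; by rewrite -EZ.
Qed.

Lemma cr_quota_sub (T : finType) (I : eqType) (ind : T -> I) C (HC : category_rule ind C) Y p q :
  p <= q -> C Y p \subset C Y q.
Proof.
move=> /subnK <-; elim: (q - p) => [|d IH] //=.
rewrite addSn; apply: subset_trans IH _; by case: (HC (d + p)) => _ _ _ _ /(_ Y) [].
Qed.

Lemma cr_quota_card (T : finType) (I : eqType) (ind : T -> I) C (HC : category_rule ind C) Y p q :
  p <= q -> #|C Y q| <= #|C Y p| + (q - p).
Proof.
move=> /subnK <-; rewrite addnK; elim: (q - p) => [|d IH] //=; first by rewrite addn0.
rewrite addSn; case: (HC (d + p)) => _ _ _ _ /(_ Y) [_ h]; lia.
Qed.


Lemma run_fst (T : finType) (I : eqType) (ind : T -> I) Ck qf k Y :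
  (run ind Ck qf k.+1 Y).1 = (run ind Ck qf k Y).1 :|: Ck k (Hk ind Ck qf k Y) (qk ind Ck qf k Y).
Proof. by rewrite /Hk /qk /=; case: (run ind Ck qf k Y). Qed.

Lemma run_snd (T : finType) (I : eqType) (ind : T -> I) Ck qf k Y :
  (run ind Ck qf k.+1 Y).2 = rcons (run ind Ck qf k Y).2
    ((qk ind Ck qf k Y)%:Z - (#|Ck k (Hk ind Ck qf k Y) (qk ind Ck qf k Y)|)%:Z)%R.
Proof. by rewrite /Hk /qk /=; case: (run ind Ck qf k Y). Qed.

Lemma size_run (T : finType) (I : eqType) (ind : T -> I) Ck qf k Y :
  size (run ind Ck qf k Y).2 = k.
Proof. by elim: k => [|k IH] //; rewrite run_snd size_rcons IH. Qed.

Lemma run_mono (T : finType) (I : eqType) (ind : T -> I) Ck qf j k Y :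
  j <= k -> (run ind Ck qf j Y).1 \subset (run ind Ck qf k Y).1.
Proof.
move=> /subnK <-; elim: (k - j) => [|d IH] //.
by rewrite addSn run_fst; apply: subset_trans IH (subsetUl _ _).
Qed.

Lemma C_in_run (T : finType) (I : eqType) (ind : T -> I) Ck qf j k Y :
  j < k -> Ck j (Hk ind Ck qf j Y) (qk ind Ck qf j Y) \subset (run ind Ck qf k Y).1.
Proof.
move=> jk; apply: subset_trans (run_mono ind Ck qf Y jk).
by rewrite run_fst subsetUr.
Qed.

Lemma in_run (T : finType) (I : eqType) (ind : T -> I) Ck qf k Y u :
  u \in (run ind Ck qf k Y).1 ->
  exists2 j, j < k & u \in Ck j (Hk ind Ck qf j Y) (qk ind Ck qf j Y).
Proof.
elim: k => [|k IH]; first by rewrite inE.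
rewrite run_fst inE => /orP [/IH [j jk uj]|uk]; first by exists j => //; exact: ltnW.
by exists k.
Qed.

Lemma all2_rcons (A B : Type) (r : A -> B -> bool) s t a b :
  size s = size t -> all2 r (rcons s a) (rcons t b) = all2 r s t && r a b.
Proof.
elim: s t => [|x s IH] [|y t] //=; first by rewrite andbT.
by case=> /IH ->; rewrite andbA.
Qed.

Lemma Xpre_S (T : finType) (xs : seq T) n x0 :
  n < size xs -> Xpre xs n.+1 = nth x0 xs n |: Xpre xs n.
Proof.
move=> nl; rewrite /Xpre (take_nth x0 nl); apply/setP=> z.
by rewrite !inE mem_rcons in_cons.
Qed.

Lemma Fk_S (T : finType) (I : eqType) (ind : T -> I) Ck qf k xs n :
  Fk ind Ck qf k xs n.+1 = Fk ind Ck qf k xs n :|: Hk ind Ck qf k (Xpre xs n.+1).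
Proof. by rewrite /Fk big_ord_recr. Qed.

Lemma Fk_0 (T : finType) (I : eqType) (ind : T -> I) Ck qf k xs :
  Fk ind Ck qf k xs 0 = Hk ind Ck qf k (Xpre xs 0).
Proof. by rewrite /Fk big_ord1. Qed.

Lemma Hk_F (T : finType) (I : eqType) (ind : T -> I) Ck qf k xs n :
  Hk ind Ck qf k (Xpre xs n) \subset Fk ind Ck qf k xs n.
Proof. by case: n => [|n]; rewrite ?Fk_0 // Fk_S subsetUr. Qed.

Lemma Hk_sub (T : finType) (I : eqType) (ind : T -> I) Ck qf k Y :
  Hk ind Ck qf k Y \subset Y.
Proof. by apply/subsetP=> z; rewrite inE => /andP []. Qed.

Lemma claim1 (T : finType) (I : eqType) (ind : T -> I) (K : nat)
  (Ck : nat -> {set T} -> nat -> {set T}) (qf : nat -> seq int -> nat)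
  (HC : forall k, k < K -> category_rule ind (Ck k))
  (xs : seq T) (Hobs : observable ind Ck qf K xs) n k :
  n < size xs -> k < K ->
  (forall j, j < k ->
     Ck j (Hk ind Ck qf j (Xpre xs n.+1)) (qk ind Ck qf j (Xpre xs n.+1)) \subset
     Ck j (Hk ind Ck qf j (Xpre xs n)) (qk ind Ck qf j (Xpre xs n)) :|:
     (Hk ind Ck qf j (Xpre xs n.+1) :\: Hk ind Ck qf j (Xpre xs n))) ->
  Ck k (Hk ind Ck qf k (Xpre xs n)) (qk ind Ck qf k (Xpre xs n)) \subset Hk ind Ck qf k (Xpre xs n.+1).
Proof.
move=> nl kK HP; apply/subsetP=> y yC.
have yH := subsetP (cr_sub (HC k kK) _ _) _ yC.
move: (yH); rewrite inE => /andP [yX yn].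
have yCs : y \in Cs ind Ck qf K (Xpre xs n) by apply: (subsetP (C_in_run _ _ _ _ kK)).
case: Hobs => _ /(_ n y nl) Hob.
rewrite inE; apply/andP; split; first by rewrite (Xpre_S y nl) in_setU1 yX orbT.
apply/existsP => [[u /andP [uR /eqP ui]]].
case: (in_run uR) => j jk uC.
move: (subsetP (HP j jk) _ uC); rewrite inE => /orP [uo|].
  move/negP: yn; apply; apply/existsP; exists u.
  by rewrite ui eqxx andbT; apply: (subsetP (C_in_run _ _ _ _ jk)).
rewrite inE => /andP [uHo uHn].
move: uHn; rewrite inE => /andP [uXn _].
move: uXn; rewrite (Xpre_S y nl) in_setU1 => /orP [/eqP ux|uX].
  move/negP: Hob; apply; apply/existsP; exists y; by rewrite yCs -ui ux eqxx.
move: uHo; rewrite inE uX /= negbK => /existsP [w /andP [wR /eqP wi]].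
move/negP: yn; apply; apply/existsP; exists w.
rewrite wi ui eqxx andbT; exact: (subsetP (run_mono _ _ _ _ (ltnW jk))).
Qed.

Lemma claim2 (T : finType) (I : eqType) (ind : T -> I) (K : nat)
  (Ck : nat -> {set T} -> nat -> {set T}) (qf : nat -> seq int -> nat)
  (HC : forall k, k < K -> category_rule ind (Ck k)) (xs : seq T) n k :
  k < K ->
  qk ind Ck qf k (Xpre xs n.+1) <= qk ind Ck qf k (Xpre xs n) ->
  Ck k (Hk ind Ck qf k (Xpre xs n)) (qk ind Ck qf k (Xpre xs n)) =
    Ck k (Fk ind Ck qf k xs n) (qk ind Ck qf k (Xpre xs n)) ->
  Ck k (Fk ind Ck qf k xs n.+1) (qk ind Ck qf k (Xpre xs n.+1)) \subset
     Ck k (Hk ind Ck qf k (Xpre xs n)) (qk ind Ck qf k (Xpre xs n)) :|: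
     (Hk ind Ck qf k (Xpre xs n.+1) :\: Hk ind Ck qf k (Xpre xs n)).
Proof.
move=> kK pq HF; apply/subsetP=> z zC.
have zF := subsetP (cr_sub (HC k kK) _ _) _ zC.
case zFo: (z \in Fk ind Ck qf k xs n).
  rewrite inE HF; apply/orP; left.
  apply: (subsetP (cr_quota_sub (HC k kK) _ pq)).
  apply: contraT => zn.
  have sF : Fk ind Ck qf k xs n \subset Fk ind Ck qf k xs n.+1 by rewrite Fk_S subsetUl.
  by have := cr_rej_mono (HC k kK) sF zFo zn; rewrite zC.
move: zF; rewrite Fk_S inE zFo /= => zH.
rewrite inE; apply/orP; right; rewrite inE zH andbT.
by apply: contraFN zFo; apply: (subsetP (Hk_F _ _ _ _ _ _)).
Qed.

Lemma claim5 (T : finType) (I : eqType) (ind : T -> I) (K : nat)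
  (Ck : nat -> {set T} -> nat -> {set T}) (qf : nat -> seq int -> nat)
  (HC : forall k, k < K -> category_rule ind (Ck k)) (xs : seq T) n k :
  k < K ->
  qk ind Ck qf k (Xpre xs n.+1) <= qk ind Ck qf k (Xpre xs n) ->
  Rk Ck k (Fk ind Ck qf k xs n) (qk ind Ck qf k (Xpre xs n)) \subset
  Rk Ck k (Fk ind Ck qf k xs n.+1) (qk ind Ck qf k (Xpre xs n.+1)).
Proof.
move=> kK pq; apply/subsetP=> z; rewrite /Rk !inE => /andP [zn zF].
have zF' : z \in Fk ind Ck qf k xs n.+1 by rewrite Fk_S inE zF.
rewrite zF' andbT; apply: (cr_rej_mono (HC k kK) _ zF).
  by rewrite Fk_S subsetUl.
apply: contra zn; exact: (subsetP (cr_quota_sub (HC k kK) _ pq)).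
Qed.

Lemma rstep (T : finType) (I : eqType) (ind : T -> I) C (HC : category_rule ind C)
  (A B : {set T}) p q : p <= q -> C A q \subset B ->
  (p%:Z - (#|C B p|)%:Z <= q%:Z - (#|C A q|)%:Z)%R.
Proof.
move=> pq sAB.
have h1 := cr_quota_card HC B pq.
have h2 : #|C A q| <= #|C B q|.
  rewrite -(cr_irc HC (Z := A :&: B) (Z' := A)); last exact: subsetIl.
    by apply: (cr_size_mono HC); exact: subsetIr.
  by rewrite subsetI sAB (cr_sub HC).
lia.
Qed.

Lemma step (T : finType) (I : eqType) (ind : T -> I) (K : nat)
  (Ck : nat -> {set T} -> nat -> {set T}) (qf : nat -> seq int -> nat)
  (HC : forall k, k < K -> category_rule ind (Ck k))
  (Hq : monotone_transfer qf)
  (xs : seq T) (Hobs : observable ind Ck qf K xs) n :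
  n < size xs ->
  (forall k, k < K -> Ck k (Hk ind Ck qf k (Xpre xs n)) (qk ind Ck qf k (Xpre xs n)) =
    Ck k (Fk ind Ck qf k xs n) (qk ind Ck qf k (Xpre xs n))) ->
  forall k, k <= K ->
  (forall j, j < k ->
    [/\ Ck j (Hk ind Ck qf j (Xpre xs n)) (qk ind Ck qf j (Xpre xs n)) \subset Hk ind Ck qf j (Xpre xs n.+1),
     Ck j (Fk ind Ck qf j xs n.+1) (qk ind Ck qf j (Xpre xs n.+1)) \subset
     Ck j (Hk ind Ck qf j (Xpre xs n)) (qk ind Ck qf j (Xpre xs n)) :|:
     (Hk ind Ck qf j (Xpre xs n.+1) :\: Hk ind Ck qf j (Xpre xs n)),
     Ck j (Hk ind Ck qf j (Xpre xs n.+1)) (qk ind Ck qf j (Xpre xs n.+1)) =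
       Ck j (Fk ind Ck qf j xs n.+1) (qk ind Ck qf j (Xpre xs n.+1)) &
     qk ind Ck qf j (Xpre xs n.+1) <= qk ind Ck qf j (Xpre xs n)]) /\
  all2 (fun a b => (a <= b)%R) (run ind Ck qf k (Xpre xs n.+1)).2 (run ind Ck qf k (Xpre xs n)).2.
Proof.
move=> nl HF; elim=> [|k IH] kK.
  by split => // j.
have kK' : k < K by [].
case: (IH (ltnW kK)) => IHa IHb.
have pk : qk ind Ck qf k (Xpre xs n.+1) <= qk ind Ck qf k (Xpre xs n).
  by apply: Hq IHb; rewrite size_run.
have c1 := claim1 HC Hobs nl kK'.
have {}c1 := c1 (ltac:(move=> j jk; case: (IHa j jk) => _ a b _; by rewrite b)).
have c2 := claim2 HC kK' pk (HF k kK').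
have c3 : Ck k (Hk ind Ck qf k (Xpre xs n.+1)) (qk ind Ck qf k (Xpre xs n.+1)) =
       Ck k (Fk ind Ck qf k xs n.+1) (qk ind Ck qf k (Xpre xs n.+1)).
  apply: (cr_irc (HC k kK')); last exact: Hk_F.
  apply: subset_trans c2 _; rewrite subUset c1 /=; exact: subsetDl.
split.
  move=> j; rewrite ltnS leq_eqVlt => /orP [/eqP ->|jk]; first by split.
  exact: IHa.
rewrite !run_snd all2_rcons ?size_run // IHb /=.
exact: (rstep (HC k kK') pk c1).
Qed.
Unset Implicit Arguments.

Theorem proposition3 (T : finType) (I : eqType) (ind : T -> I) (K : nat)
  (Ck : nat -> {set T} -> nat -> {set T}) (qf : nat -> seq int -> nat)
  (HC : forall k, k < K -> category_rule ind (Ck k))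
  (Hq : monotone_transfer qf)
  (xs : seq T) (Hobs : observable ind Ck qf K xs) :
  forall m k, 1 <= m <= size xs -> k < K ->
  let H n := Hk ind Ck qf k (Xpre xs n) in
  let q n := qk ind Ck qf k (Xpre xs n) in
  let F n := Fk ind Ck qf k xs n in
  [/\ Ck k (H m.-1) (q m.-1) \subset H m,
      Ck k (F m) (q m) \subset Ck k (H m.-1) (q m.-1) :|: (H m :\: H m.-1),
      Ck k (H m) (q m) = Ck k (F m) (q m),
      q m <= q m.-1 &
      Rk Ck k (F m.-1) (q m.-1) \subset Rk Ck k (F m) (q m)].
Proof.
have HF : forall n, n <= size xs -> forall k, k < K ->
    Ck k (Hk ind Ck qf k (Xpre xs n)) (qk ind Ck qf k (Xpre xs n)) =
    Ck k (Fk ind Ck qf k xs n) (qk ind Ck qf k (Xpre xs n)).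
  elim=> [|n IH] nl k kK; first by rewrite Fk_0.
  have nl' : n < size xs by [].
  have [Ha _] := step HC Hq Hobs nl' (IH (ltnW nl)) (leqnn K).
  by case: (Ha k kK).
move=> [//|n] k /andP [_ nl] kK H q F /=.
have [Ha _] := step HC Hq Hobs nl (HF n (ltnW nl)) (leqnn K).
case: (Ha k kK) => a b c d; split => //.
exact: (claim5 HC kK d).
Qed.
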